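(* There exists a family of broadcast protocols $(P_n)_{n}$, $P_n=(Q_n,I_n,M_n,\Delta_n)$, with target sets $F_n\subseteq Q_n$ and $|Q_n|\in O(n)$, such that for every $n$ there exist both a reconfigurable execution and a lossy execution of $P_n$ covering $F_n$, and every reconfigurable or lossy execution of $P_n$ covering $F_n$ has $\Omega(n)$ nodes and length $\Omega(n^2)$.
   Context: A broadcast protocol is a tuple $P=(Q,I,M,\Delta)$ where $Q$ is a finite set of states, $I\subseteq Q$ initial states, $M$ a finite message alphabet and $\Delta\subseteq Q\times\{!!m,\ ??m \mid m\in M\}\times Q$ ($!!m$ = broadcast, $??m$ = reception); protocols are complete for receptions (for every $q$, $m$ there is $q'$ with $(q,??m,q')\in\Delta$). A configuration is a finite undirected graph $\gamma=(V,E,L)$, $E$ symmetric irreflexive, $L:V\to Q$; initial if $L(V)\subseteq I$. A reconfigurable step from $(V,E,L)$ to $(V,E',L')$ ($E'$ arbitrary): some node $v$ and $m$ with $(L(v),!!m,L'(v))\in\Delta$, every neighbour $v'$ of $v$ in $E$ satisfies $(L(v'),??m,L'(v'))\in\Delta$, every other node keeps its label. A lossy step from $(V,E,L)$ to $(V,E,L')$ (edges fixed): some $v$, $m$ with $(L(v),!!m,L'(v))\in\Delta$ and either all other nodes keep their labels (lost broadcast) or as in the reconfigurable step with $E$ (successful broadcast). A reconfigurable (resp. lossy) execution is a sequence $\gamma_0,\dots,\gamma_r$ with $\gamma_0$ initial and consecutive reconfigurable (resp. lossy) steps; its number of nodes is $|V|$, its length is $r$, and it covers $F$ if some node of $\gamma_r$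 has a label in $F$. *)

(* Defs.v *)
From mathcomp Require Import all_boot.
Set Implicit Arguments. Unset Strict Implicit. Unset Printing Implicit Defensive.

(* The transition relation
   Delta ⊆ Q × {!!m, ??m | m ∈ M} × Q is split into its broadcast part
   [pbcast q m q'] (= (q, !!m, q') ∈ Delta) and its reception part
   [precv q m q'] (= (q, ??m, q') ∈ Delta). *)
Record protocol : Type := Protocol {
  pstate : finType;
  pmsg : finType;
  pinit : pred pstate;
  pbcast : pstate -> pmsg -> pstate -> bool;
  precv : pstate -> pmsg -> pstate -> bool;
  precv_complete : forall q m, exists q', precv q m q'
}.
Arguments pinit : clear implicits.
Arguments pbcast : clear implicits.
Arguments precv : clear implicits.

Record config (P : protocol) (V : finType) : Type := Config {
  cedge : rel V;
  clab : V -> pstate P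
}.

Definition is_config (P : protocol) (V : finType) (g : config P V) : Prop :=
  symmetric (cedge g) /\ irreflexive (cedge g).

Definition is_initial (P : protocol) (V : finType) (g : config P V) : Prop :=
  forall v, pinit P (clab g v).

Definition bcast_by (P : protocol) (V : finType) (g g' : config P V)
  (v : V) (m : pmsg P) : Prop :=
  pbcast P (clab g v) m (clab g' v) /\
  forall u, u != v ->
    (cedge g v u -> precv P (clab g u) m (clab g' u)) /\
    (~~ cedge g v u -> clab g' u = clab g u).

(* Reconfigurable step: E' arbitrary. *)
Definition reconf_step (P : protocol) (V : finType) (g g' : config P V) : Prop :=
  exists v m, bcast_by g g' v m.

(* Lossy step: edges fixed; broadcast lost or successful. *)
Definition lossy_step (P : protocol) (V : finType) (g g' : config P V) : Prop :=
  (forall x y, cedge g' x y = cedge g x y) /\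
  exists v m,
    (pbcast P (clab g v) m (clab g' v) /\ forall u, u != v -> clab g' u = clab g u)
    \/ bcast_by g g' v m.

Fixpoint chain (A : Type) (R : A -> A -> Prop) (x : A) (s : seq A) : Prop :=
  match s with
  | [::] => True
  | y :: s' => R x y /\ chain R y s'
  end.

(* An execution gamma_0, ..., gamma_r is represented by gamma_0 = g0 and
   gs = [:: gamma_1; ...; gamma_r]; its length is r = size gs and its
   number of nodes is #|V|. *)
Definition execution (P : protocol) (V : finType)
  (step : config P V -> config P V -> Prop) (g0 : config P V)
  (gs : seq (config P V)) : Prop :=
  is_initial g0 /\ is_config g0 /\ (forall i, i < size gs -> is_config (nth g0 gs i)) /\
  chain step g0 gs.

Definition reconf_execution (P : protocol) (V : finType) (g0 : config P V)
  (gs : seq (config P V)) : Prop := execution (@reconf_step P V) g0 gs.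

Definition lossy_execution (P : protocol) (V : finType) (g0 : config P V)
  (gs : seq (config P V)) : Prop := execution (@lossy_step P V) g0 gs.

Definition covers (P : protocol) (V : finType) (F : pred (pstate P))
  (g0 : config P V) (gs : seq (config P V)) : Prop :=
  exists v, F (clab (last g0 gs) v).

(* Main.v *)
Require Import Defs.
From mathcomp Require Import all_boot.
From mathcomp Require Import zify.
Set Implicit Arguments. Unset Strict Implicit. Unset Printing Implicit Defensive.

Section Prot.
Variable n : nat.
Definition Qn : finType := ('I_n.+2 + 'I_n.+1)%type.

Definition initn (q : Qn) : bool :=
  match q with inl i => val i == 0 | inr k => val k == 0 end.
Definition bcn (q : Qn) (m : bool) (q' : Qn) : bool :=
  match q, q' with
  | inl i, inl j => (val j == (val i).+1) && (m == (val i == n))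
  | _, _ => false end.
Definition rcn (q : Qn) (m : bool) (q' : Qn) : bool :=
  (q' == q) || (m && match q, q' with
                     | inr k, inr k' => val k' == (val k).+1
                     | _, _ => false end).
Lemma rcn_complete q m : exists q', rcn q m q'.
Proof. by exists q; rewrite /rcn eqxx. Qed.

Definition Tq (q : Qn) : nat := if q is inl i then val i else 0.
Definition dq (q : Qn) : nat := if q is inl i then (val i == n.+1) : nat else 0.
Definition cq (q : Qn) : nat := if q is inr k then val k else 0.
Definition Fq (q : Qn) : bool := if q is inr k then val k == n else false.

Lemma bc_facts q m q' : bcn q m q' ->
  Tq q' = (Tq q).+1 /\ dq q = 0 /\ dq q' = m /\ cq q' = 0.
Proof.
case: q => [i|k]; case: q' => [j|k'] //= /andP[/eqP Hj /eqP Hm].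
have Hi : (val i).+1 < n.+2 by rewrite -Hj.
split => //; split; first by case: eqP => // E; by move: Hi; rewrite /= E ltnn.
split => //; rewrite Hm Hj eqSS; by case: (val i == n).
Qed.

Lemma rc_facts q m q' : q' = q \/ rcn q m q' ->
  Tq q' = Tq q /\ dq q' = dq q /\ cq q' <= cq q + m.
Proof.
case=> [->|]; first by rewrite addnC leq_addl.
rewrite /rcn => /orP[/eqP ->|]; first by rewrite addnC leq_addl.
case: m => //; case: q => [i|k]; case: q' => [j|k'] //= /eqP ->.
by rewrite addn1.
Qed.

Lemma init_facts q : initn q -> Tq q = 0 /\ cq q = 0.
Proof. by case: q => [i|k] /= /eqP ->. Qed.

Lemma dq_T q : n.+1 * dq q <= Tq q.
Proof. case: q => [i|k] /=; last by rewrite muln0. have [->|_] := eqVneq (val i) n.+1; by rewrite ?muln1 ?muln0. Qed.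
Lemma dq_le1 q : dq q <= 1.
Proof. by case: q => [i|k] //=; case: (val i == n.+1). Qed.
End Prot.

Definition Pn (n : nat) : protocol := @Protocol (Qn n) bool (@initn n) (@bcn n) (@rcn n) (@rcn_complete n).
Definition Fn (n : nat) : pred (pstate (Pn n)) := @Fq n.
Arguments Fn : clear implicits.

Section Lower.
Variable n : nat.
Variable V : finType.

Definition gstep (L L' : V -> Qn n) := exists v m,
  bcn (L v) m (L' v) /\ forall u, u != v -> L' u = L u \/ rcn (L u) m (L' u).

Lemma reconf_gstep (g g' : config (Pn n) V) : reconf_step g g' -> gstep (clab g) (clab g').
Proof.
case=> v [m [Hb Hu]]; exists v, m; split => // u /Hu [H1 H2].
by case: (boolP (cedge g v u)) => [/H1|/H2]; auto.
Qed.

Lemma lossy_gstep (g g' : config (Pn n) V) : lossy_step g g' -> gstep (clab g) (clab g').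
Proof.
case=> _ [v [m [[Hb Hu]|[Hb Hu]]]]; exists v, m; split => // u Huv.
  by left; apply: Hu.
by case: (Hu u Huv) => H1 H2; case: (boolP (cedge g v u)) => [/H1|/H2]; auto.
Qed.

Definition Phi (L : V -> Qn n) := \sum_u Tq (L u).
Definition Ds (L : V -> Qn n) := \sum_u dq (L u).

Lemma gstep_inv L L' : gstep L L' ->
  Phi L' = (Phi L).+1 /\
  ((forall u, cq (L u) <= Ds L) -> forall u, cq (L' u) <= Ds L').
Proof.
case=> v [m [Hb Hu]].
have [T1 [D0 [D1 C1]]] := bc_facts Hb.
have Hr : forall u, u != v -> Tq (L' u) = Tq (L u) /\ dq (L' u) = dq (L u) /\ cq (L' u) <= cq (L u) + m.
  by move=> u /Hu; apply: rc_facts.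
have ET : \sum_(u | u != v) Tq (L' u) = \sum_(u | u != v) Tq (L u).
  by apply: eq_bigr => u /Hr [].
have ED : \sum_(u | u != v) dq (L' u) = \sum_(u | u != v) dq (L u).
  by apply: eq_bigr => u /Hr [_ []].
have EDs : Ds L' = m + Ds L.
  by rewrite /Ds (bigD1 v) //= (bigD1 v (P := xpredT)) //= ED D0 D1.
split.
  by rewrite /Phi (bigD1 v) //= (bigD1 v (P := xpredT)) //= ET T1.
move=> Hc u; rewrite EDs.
have [->|Huv] := eqVneq u v; first by rewrite C1.
have [_ [_ H]] := Hr u Huv.
by apply: (leq_trans H); rewrite addnC leq_add2l.
Qed.

Lemma chain_inv (R : config (Pn n) V -> config (Pn n) V -> Prop)
  (HR : forall g g', R g g' -> gstep (clab g) (clab g')) (gs : seq (config (Pn n) V)) : forall (g : config (Pn n) V) k,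
  Phi (clab g) <= k -> (forall u, cq (clab g u) <= Ds (clab g)) ->
  chain R g gs ->
  Phi (clab (last g gs)) <= k + size gs /\
  forall u, cq (clab (last g gs) u) <= Ds (clab (last g gs)).
Proof.
elim: gs => [|g1 gs IH] g k Hp Hc /=; first by rewrite addn0.
case=> /HR /gstep_inv [E1 E2] Hch.
have := IH g1 k.+1; rewrite addnS -addSn; apply => //.
by rewrite E1.
by apply: E2.
Qed.

Lemma lower (R : config (Pn n) V -> config (Pn n) V -> Prop)
  (HR : forall g g', R g g' -> gstep (clab g) (clab g')) g0 gs :
  execution R g0 gs -> covers (Fn n) g0 gs ->
  n <= #|V| /\ n ^ 2 <= size gs.
Proof.
case=> Hi [_ [_ Hch]] [w Hw].
have Hp0 : Phi (clab g0) <= 0.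
  rewrite leqn0 /Phi; apply/eqP; apply: big1 => u _.
  by have [] := init_facts (Hi u).
have Hc0 : forall u, cq (clab g0 u) <= Ds (clab g0).
  by move=> u; have [_ ->] := init_facts (Hi u).
have [Hp Hc] := chain_inv HR Hp0 Hc0 Hch.
set L := clab (last g0 gs) in Hp Hc Hw.
have Hn : n <= Ds L.
  move: (Hc w) Hw; rewrite /Fn /=; case: (L w) => [i|k] //= H /eqP <-; exact: H.
have HD : Ds L <= #|V|.
  rewrite -sum1_card; apply: leq_sum => u _; exact: dq_le1.
have HDP : n.+1 * Ds L <= Phi L.
  rewrite /Ds big_distrr /=; apply: leq_sum => u _; exact: dq_T.
split; first exact: leq_trans Hn HD.
rewrite add0n in Hp.
have : n * n.+1 <= size gs.
  apply: leq_trans Hp; apply: leq_trans HDP; rewrite mulnC; exact: leq_mul.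
move=> H; apply: leq_trans H; rewrite expnS expn1; exact: leq_mul.
Qed.
End Lower.

Section Upper.
Variable n : nat.
Let V : finType := option 'I_n.

Definition lstep (L L' : V -> Qn n) := exists v m,
  bcn (L v) m (L' v) /\ forall u, u != v -> rcn (L u) m (L' u).

Inductive reach : (V -> Qn n) -> (V -> Qn n) -> Prop :=
| r0 L : reach L L
| rS L L' L'' : lstep L L' -> reach L' L'' -> reach L L''.

Lemma reach_trans L1 L2 L3 : reach L1 L2 -> reach L2 L3 -> reach L1 L3.
Proof. elim=> // L L' L'' H _ IH H3; apply: rS H (IH H3). Qed.

Lemma reach_seq L L' : reach L L' -> exists s, chain lstep L s /\ last L s = L'.
Proof.
elim=> [L0|L0 L1 L2 H _ [s [Hs Hl]]]; first by exists [::].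
by exists (L1 :: s).
Qed.

Definition full (L : V -> Qn n) : config (Pn n) V := @Config (Pn n) V (fun x y => x != y) L.

Lemma full_config L : is_config (full L).
Proof. split; [by move=> x y /=; rewrite eq_sym | by move=> x /=; rewrite eqxx]. Qed.

Lemma full_bc L L' : lstep L L' -> reconf_step (full L) (full L') /\ lossy_step (full L) (full L').
Proof.
case=> v [m [Hb Hu]].
have HB : bcast_by (full L) (full L') v m.
  split => // u Huv; split => /=; first by move=> _; apply: Hu.
  by rewrite eq_sym Huv.
split; first by exists v, m.
by split => //; exists v, m; right.
Qed.

Lemma chain_full (R : config (Pn n) V -> config (Pn n) V -> Prop)
  (HR : forall L L', lstep L L' -> R (full L) (full L')) s : forall L,
  chain lstep L s -> chain R (full L) (map full s).
Proof. elim: s => //= L1 s IH L [H1 H2]; split; [exact: HR | exact: IH]. Qed.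

Definition Lab (j l : nat) (u : V) : Qn n :=
  match u with
  | None => inr (inord j)
  | Some i => inl (if i < j then inord n.+1 else if (i : nat) == j then inord l else inord 0)
  end.

Lemma step1 j l : j < n -> l < n -> lstep (Lab j l) (Lab j l.+1).
Proof.
move=> Hj Hl; exists (Some (Ordinal Hj)), false; split.
  have H1 : l < n.+2 by lia.
  have H2 : l.+1 < n.+2 by lia.
  rewrite /= ltnn eqxx /= !inordK //.
  by rewrite eqxx /= eq_sym (ltn_eqF Hl).
case=> [i|] Hi; rewrite /rcn /=; last by rewrite eqxx.
have Hij : (i : nat) != j.
  by apply: contra Hi => /eqP E; apply/eqP; congr Some; apply: val_inj.
by rewrite (negbTE Hij) eqxx.
Qed.

Lemma step2 j : j < n -> lstep (Lab j n) (Lab j.+1 0).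
Proof.
move=> Hj; exists (Some (Ordinal Hj)), true; split.
  have H1 : n < n.+2 by lia.
  rewrite /= ltnn eqxx /= ltnSn !inordK //.
  by rewrite !eqxx.
case=> [i|] Hi; rewrite /rcn /=.
  2: have H1 : j < n.+1 by lia.
  2: have H2 : j.+1 < n.+1 by lia.
  2: by rewrite !inordK ?eqxx ?orbT.
have Hij : (i : nat) != j.
  by apply: contra Hi => /eqP E; apply/eqP; congr Some; apply: val_inj.
rewrite ltnS leq_eqVlt (negbTE Hij) /=.
case: ltnP => Hlt; first by rewrite eqxx.
by case: (_ == j.+1); rewrite eqxx.
Qed.

Lemma reach_l j l : j < n -> l <= n -> reach (Lab j 0) (Lab j l).
Proof.
move=> Hj; elim: l => [|l IH] Hl; first exact: r0.
apply: reach_trans (IH (ltnW Hl)) _; apply: rS (step1 Hj Hl) (r0 _).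
Qed.

Lemma reach_j j : j <= n -> reach (Lab 0 0) (Lab j 0).
Proof.
elim: j => [|j IH] Hj; first exact: r0.
apply: reach_trans (IH (ltnW Hj)) _; apply: reach_trans (reach_l Hj (leqnn n)) _.
apply: rS (step2 Hj) (r0 _).
Qed.

Lemma upper (R : config (Pn n) V -> config (Pn n) V -> Prop)
  (HR : forall L L', lstep L L' -> R (full L) (full L')) :
  exists (g0 : config (Pn n) V) (gs : seq (config (Pn n) V)),
    execution R g0 gs /\ covers (Fn n) g0 gs.
Proof.
have [s [Hs Hl]] := reach_seq (reach_j (leqnn n)).
exists (full (Lab 0 0)), (map full s); split; last first.
  exists None; rewrite (last_map full) Hl /=; apply/eqP; exact: inordK.
split.
  case=> [i|] /=; rewrite /initn; apply/eqP; last exact: inordK.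
  by case: ifP => _; try case: ifP => _; apply: inordK.
split; first exact: full_config.
split; last exact: chain_full.
by move=> i Hi; rewrite (nth_map (Lab 0 0)) -?(size_map full) //; exact: full_config.
Qed.
End Upper.

Theorem theorem3p8 :
  exists (P : nat -> protocol) (F : forall n, pred (pstate (P n))),
    (* |Q_n| ∈ O(n) *)
    (exists c N, forall n, N <= n -> #|pstate (P n)| <= c * n) /\
    (* for every n, a covering reconfigurable and a covering lossy execution exist *)
    (forall n,
       (exists (V : finType) (g0 : config (P n) V) (gs : seq (config (P n) V)),
          reconf_execution g0 gs /\ covers (F n) g0 gs) /\
       (exists (V : finType) (g0 : config (P n) V) (gs : seq (config (P n) V)),
          lossy_execution g0 gs /\ covers (F n) g0 gs)) /\
    (* every covering execution has Ω(n) nodes and length Ω(n^2) *)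
    (exists c N, 0 < c /\ forall n, N <= n ->
       forall (V : finType) (g0 : config (P n) V) (gs : seq (config (P n) V)),
         (reconf_execution g0 gs \/ lossy_execution g0 gs) ->
         covers (F n) g0 gs ->
         n <= c * #|V| /\ n ^ 2 <= c * size gs).
Proof.
exists Pn, Fn; split.
  exists 5, 1 => n Hn; rewrite /= card_sum !card_ord; lia.
split.
  move=> n; split; exists (option 'I_n : finType).
    by apply: upper => L L' /full_bc [].
  by apply: upper => L L' /full_bc [].
exists 1, 0; split => // n _ V g0 gs Hex Hcov; rewrite !mul1n.
case: Hex => Hex.
  exact: (@lower n V _ (@reconf_gstep n V) g0 gs Hex Hcov).
exact: (@lower n V _ (@lossy_gstep n V) g0 gs Hex Hcov).
Qed.
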